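(* (1) The sets $\Gamma$ and $\Gamma^\circ$ are positive invariant. (2) For every $x\in\mathbb{R}^2$, $\Gamma^\circ\subset L(x)$.
   Context: Fix $\alpha>\beta>0$. For $i\in\{0,1\}$ let $\Phi_i^t(x_1,x_2)=(i+(x_1-i)e^{-\alpha t},\, i+(x_2-i)e^{-\beta t})$, $t\in\mathbb{R}$, be the flow of the vector field $u_i(x_1,x_2)=(-\alpha(x_1-i),-\beta(x_2-i))$. For $n\ge1$, $(t_1,\dots,t_n)\in(0,\infty)^n$ and $i\in\{0,1\}$, let $\Phi_i^{(t_1,\dots,t_n)}=\Phi_i^{t_n}\circ\Phi_{1-i}^{t_{n-1}}\circ\Phi_i^{t_{n-2}}\circ\cdots$ (composition of $n$ flows with alternating indices, the last one applied being $\Phi_i^{t_n}$). A point $x$ is reachable from $y$ if $x=\Phi_i^{(t_1,\dots,t_n)}(y)$ for some $i\in\{0,1\}$, $n\in\mathbb{N}$ and $(t_1,\dots,t_n)\in(0,\infty)^n$; $L(y)$ is the set of points reachable from $y$. A nonempty set $S\subset\mathbb{R}^2$ is positive invariant if $L(y)\subset S$ for all $y\in S$ (equivalently $\Phi_i^t(x)\in S$ for all $i$, $t\ge0$, $x\in S$). Let $\Gamma=\{(x_1,x_2): 0\le x_2\le1,\ x_2^{\alpha/\beta}\le x_1\le 1-(1-x_2)^{\alpha/\beta}\}$ and $\Gamma^\circ$ its interior. *)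

(* Defs.v *)
From Stdlib Require Import Reals List.
Open Scope R_scope.

Definition pt := (R * R)%type.

(* real power x^p for x >= 0 and p > 0, with 0^p = 0 (Rpower alone gives 0^p = 1) *)
Definition rpow (x p : R) : R := if Rle_dec x 0 then 0 else Rpower x p.

Definition idx (i : bool) : R := if i then 1 else 0.

Definition Phi (alpha beta : R) (i : bool) (t : R) (x : pt) : pt :=
  (idx i + (fst x - idx i) * exp (- alpha * t),
   idx i + (snd x - idx i) * exp (- beta * t)).

(* rflow i [t_n; t_{n-1}; ...; t_1] y = Phi_i^{t_n} (Phi_{1-i}^{t_{n-1}} (... y)) *)
Fixpoint rflow (alpha beta : R) (i : bool) (ts : list R) (y : pt) : pt :=
  match ts with
  | nil => y
  | t :: rest => Phi alpha beta i t (rflow alpha beta (negb i) rest y)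
  end.

Definition multiflow (alpha beta : R) (i : bool) (ts : list R) (y : pt) : pt :=
  rflow alpha beta i (rev ts) y.

Definition reachable (alpha beta : R) (y x : pt) : Prop :=
  exists (i : bool) (ts : list R),
    ts <> nil /\ Forall (fun t => 0 < t) ts /\ x = multiflow alpha beta i ts y.

Definition L (alpha beta : R) (y : pt) : pt -> Prop := reachable alpha beta y.

Definition pos_invariant (alpha beta : R) (S : pt -> Prop) : Prop :=
  (exists x, S x) /\ forall y, S y -> forall x, L alpha beta y x -> S x.

Definition Gamma (alpha beta : R) (x : pt) : Prop :=
  0 <= snd x <= 1 /\
  rpow (snd x) (alpha / beta) <= fst x <= 1 - rpow (1 - snd x) (alpha / beta).

Definition interior2 (S : pt -> Prop) (x : pt) : Prop :=
  exists eps, 0 < eps /\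
    forall y : pt, sqrt ((fst y - fst x)^2 + (snd y - snd x)^2) < eps -> S y.

Definition Gamma_int (alpha beta : R) : pt -> Prop := interior2 (Gamma alpha beta).

(* Main.v *)
Require Import Defs.
From Stdlib Require Import Reals List Lra Psatz.
From Coquelicot Require Import Coquelicot.
Open Scope R_scope.

Lemma rpow_pos x p : 0 < x -> rpow x p = exp (p * ln x).
Proof. intros. unfold rpow, Rpower. destruct (Rle_dec x 0); [lra|reflexivity]. Qed.

Lemma rpow_nonpos x p : x <= 0 -> rpow x p = 0.
Proof. intros. unfold rpow. destruct (Rle_dec x 0); [reflexivity|lra]. Qed.

Lemma rpow_ge0 x p : 0 <= rpow x p.
Proof. unfold rpow, Rpower. destruct (Rle_dec x 0); [lra|]. left; apply exp_pos. Qed.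

Lemma exp_le x y : x <= y -> exp x <= exp y.
Proof. intros [H|H]; [left; apply exp_increasing; auto|subst; lra]. Qed.

Lemma exp_le1 x : x <= 0 -> exp x <= 1.
Proof. intros. rewrite <- exp_0. apply exp_le; auto. Qed.
Lemma exp_ge1 x : 0 <= x -> 1 <= exp x.
Proof. intros. rewrite <- exp_0. apply exp_le; auto. Qed.

Lemma ln_le x y : 0 < x -> x <= y -> ln x <= ln y.
Proof. intros H [H1|H1]; [left; apply ln_increasing; auto|subst; lra]. Qed.

Lemma rpow_le1 x p : 0 <= p -> x <= 1 -> rpow x p <= 1.
Proof.
  intros Hp Hx. destruct (Rle_dec x 0).
  - rewrite rpow_nonpos; lra.
  - rewrite rpow_pos by lra. rewrite <- exp_0. apply exp_le.
    assert (ln x <= 0) by (rewrite <- ln_1; apply ln_le; lra). nra.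
Qed.

Lemma rpow_1 p : rpow 1 p = 1.
Proof. rewrite rpow_pos by lra. rewrite ln_1, Rmult_0_r, exp_0. reflexivity. Qed.

Lemma bernoulli p r : 1 <= p -> 0 <= r -> 1 + p * (r - 1) <= rpow r p.
Proof.
  intros Hp Hr. destruct (Rle_dec r 0).
  - rewrite rpow_nonpos by lra. assert (r = 0) by lra. subst. lra.
  - rewrite rpow_pos by lra.
    set (f := fun u => exp (p * ln u) - p * u).
    set (f' := fun u => p * exp ((p-1) * ln u) - p).
    assert (Hd : forall c, 0 < c -> derivable_pt_lim f c (f' c)).
    { intros c Hc. apply is_derive_Reals. unfold f, f'. auto_derive. lra.
      replace ((p-1)*ln c) with (p*ln c + - ln c) by ring.
      rewrite exp_plus, exp_Ropp, exp_ln by lra. field. lra. }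
    assert (Hf1 : f 1 = 1 - p) by (unfold f; rewrite ln_1, Rmult_0_r, exp_0; ring).
    destruct (Rtotal_order r 1) as [Hlt|[Heq|Hgt]].
    + destruct (MVT_cor2 f f' r 1 Hlt) as [c [Hc1 Hc2]].
      { intros c Hc. apply Hd. lra. }
      assert (exp ((p-1) * ln c) <= 1).
      { apply exp_le1. assert (ln c <= 0) by (rewrite <- ln_1; apply ln_le; lra). nra. }
      unfold f' in Hc1. unfold f in Hc1, Hf1. clear Hd. clearbody f f'.
      assert (0 <= p * (1 - exp ((p - 1) * ln c)) * (1 - r)) by (apply Rmult_le_pos; [apply Rmult_le_pos|]; lra).
      nra.
    + subst. rewrite ln_1, Rmult_0_r, exp_0. lra.
    + destruct (MVT_cor2 f f' 1 r Hgt) as [c [Hc1 Hc2]].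
      { intros c Hc. apply Hd. lra. }
      assert (1 <= exp ((p-1) * ln c)).
      { apply exp_ge1. assert (0 <= ln c) by (rewrite <- ln_1; apply ln_le; lra). nra. }
      unfold f' in Hc1. unfold f in Hc1, Hf1. clear Hd. clearbody f f'.
      assert (0 <= p * (exp ((p - 1) * ln c) - 1) * (r - 1)) by (apply Rmult_le_pos; [apply Rmult_le_pos|]; lra).
      nra.
Qed.

Lemma rpow_div u m p : 0 <= u -> 0 < m -> rpow (u / m) p * rpow m p = rpow u p.
Proof.
  intros Hu Hm. destruct (Rle_dec u 0).
  - assert (u = 0) by lra. subst. unfold Rdiv. rewrite Rmult_0_l. rewrite (rpow_nonpos 0) by lra. ring.
  - assert (0 < u / m) by (apply Rdiv_lt_0_compat; lra).
    rewrite !rpow_pos by lra. rewrite <- exp_plus. f_equal.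
    unfold Rdiv. rewrite ln_mult, ln_Rinv; try ring; try lra; apply Rinv_0_lt_compat; lra.
Qed.

Lemma tangent p u m : 1 <= p -> 0 <= u -> 0 < m -> rpow m p * (1 + p * (u / m - 1)) <= rpow u p.
Proof.
  intros. rewrite <- (rpow_div u m p) by lra.
  assert (0 <= u / m) by (apply Rmult_le_pos; [lra| left; apply Rinv_0_lt_compat; lra]).
  pose proof (bernoulli p (u/m) H H2). pose proof (rpow_ge0 m p).
  rewrite (Rmult_comm (rpow (u/m) p)). apply Rmult_le_compat_l; auto.
Qed.

Lemma jensen p a F : 1 <= p -> 0 <= a <= 1 -> 0 <= F <= 1 ->
  rpow (1 - F + F * a) p <= 1 - F + F * rpow a p.
Proof.
  intros Hp Ha HF. pose proof (rpow_ge0 a p).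
  destruct (Rle_dec (1 - F + F * a) 0).
  - rewrite rpow_nonpos by lra. nra.
  - set (m := 1 - F + F * a) in *.
    pose proof (tangent p 1 m Hp ltac:(lra) ltac:(lra)) as T1.
    pose proof (tangent p a m Hp ltac:(lra) ltac:(lra)) as T2.
    rewrite rpow_1 in T1.
    assert (Hid : (1-F)*(1+p*(1/m-1)) + F*(1+p*(a/m-1)) = 1) by (unfold m in *; field; lra).
    set (M := rpow m p) in *.
    assert (M = (1-F) * (M * (1+p*(1/m-1))) + F * (M * (1+p*(a/m-1)))).
    { transitivity (M * ((1-F)*(1+p*(1/m-1)) + F*(1+p*(a/m-1)))). rewrite Hid; ring. ring. }
    rewrite H0.
    assert (0 <= 1 - F) by lra.
    pose proof (Rmult_le_compat_l _ _ _ H1 T1).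
    pose proof (Rmult_le_compat_l _ _ _ (proj1 HF) T2). lra.
Qed.

Lemma Pge1 alpha beta : 0 < beta -> beta < alpha -> 1 < alpha / beta.
Proof. intros. apply (Rmult_lt_reg_r beta); auto. unfold Rdiv. rewrite Rmult_assoc, Rinv_l; lra. Qed.

Lemma exp_time alpha beta t : 0 < beta -> exp (- alpha * t) = exp (alpha / beta * (- beta * t)).
Proof. intros. f_equal. field. lra. Qed.

Lemma rpow_scale x p c : 0 <= x -> rpow (x * exp c) p = rpow x p * exp (p * c).
Proof.
  intros Hx. destruct (Rle_dec x 0).
  - assert (x = 0) by lra. subst. rewrite Rmult_0_l, rpow_nonpos by lra. ring.
  - pose proof (exp_pos c). rewrite !rpow_pos by nra. rewrite <- exp_plus. f_equal.
    rewrite ln_mult, ln_exp by lra. ring.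
Qed.

Lemma Gamma_Phi0 alpha beta t x : 0 < beta -> beta < alpha -> 0 <= t ->
  Gamma alpha beta x -> Gamma alpha beta (Phi alpha beta false t x).
Proof.
  intros Hb Hab Ht. destruct x as [x1 x2]. unfold Gamma, Phi, idx; simpl.
  set (P := alpha / beta). pose proof (Pge1 alpha beta Hb Hab) as HP. fold P in HP.
  rewrite !Rplus_0_l, !Rminus_0_r.
  set (F := exp (- beta * t)). assert (HE : exp (- alpha * t) = exp (P * (- beta * t))) by (apply exp_time; lra).
  rewrite HE. set (E := exp (P * (- beta * t))).
  assert (0 < F <= 1) by (split; [apply exp_pos| apply exp_le1; nra]).
  assert (0 < E <= F) by (split; [apply exp_pos| unfold E, F; apply exp_le; assert (0 <= beta * t) by nra; nra]).
  intros [[H1 H2] [H3 H4]].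
  assert (HR : rpow (x2 * F) P = rpow x2 P * E) by (unfold F, E; apply rpow_scale; lra).
  clearbody E F.
  pose proof (rpow_le1 (1 - x2) P ltac:(lra) ltac:(lra)).
  pose proof (jensen P (1 - x2) F ltac:(lra) ltac:(lra) ltac:(lra)) as HJ.
  replace (1 - F + F * (1 - x2)) with (1 - x2 * F) in HJ by ring.
  pose proof (rpow_ge0 (1 - x2) P).
  split; [split; nra|split].
  - rewrite HR. nra.
  - assert (0 <= (1 - rpow (1 - x2) P - x1) * E) by (apply Rmult_le_pos; lra).
    assert (0 <= (1 - rpow (1 - x2) P) * (F - E)) by (apply Rmult_le_pos; lra).
    nra.
Qed.

Lemma Gamma_sym alpha beta x1 x2 : Gamma alpha beta (x1, x2) -> Gamma alpha beta (1 - x1, 1 - x2).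
Proof.
  unfold Gamma; simpl. replace (1 - (1 - x2)) with x2 by ring. lra.
Qed.

Lemma Gamma_Phi alpha beta i t x : 0 < beta -> beta < alpha -> 0 <= t ->
  Gamma alpha beta x -> Gamma alpha beta (Phi alpha beta i t x).
Proof.
  intros. destruct i.
  - destruct x as [x1 x2].
    assert (Phi alpha beta true t (x1, x2) =
      (1 - fst (Phi alpha beta false t (1 - x1, 1 - x2)), 1 - snd (Phi alpha beta false t (1 - x1, 1 - x2)))).
    { unfold Phi, idx; simpl. f_equal; ring. }
    rewrite H3. apply Gamma_sym. rewrite <- surjective_pairing.
    apply Gamma_Phi0; auto. apply Gamma_sym; auto.
  - apply Gamma_Phi0; auto.
Qed.

Lemma sqrt_lt_sq S r : 0 <= S -> sqrt S < r -> S < r ^ 2.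
Proof.
  intros. pose proof (sqrt_sqrt S H). pose proof (sqrt_pos S). nra.
Qed.

Lemma sq_lt_sqrt S r : 0 <= S -> 0 <= r -> S < r ^ 2 -> sqrt S < r.
Proof.
  intros. rewrite <- (sqrt_pow2 r H0). apply sqrt_lt_1_alt. lra.
Qed.

Lemma Phi_inv alpha beta i t y : Phi alpha beta i t (Phi alpha beta i (- t) y) = y.
Proof.
  destruct y as [y1 y2]. unfold Phi; simpl.
  assert (H1 : exp (- alpha * - t) * exp (- alpha * t) = 1) by (rewrite <- exp_plus; replace (- alpha * - t + - alpha * t) with 0 by ring; apply exp_0).
  assert (H2 : exp (- beta * - t) * exp (- beta * t) = 1) by (rewrite <- exp_plus; replace (- beta * - t + - beta * t) with 0 by ring; apply exp_0).
  f_equal.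
  - transitivity (idx i + (y1 - idx i) * (exp (- alpha * - t) * exp (- alpha * t))); [ring|rewrite H1; ring].
  - transitivity (idx i + (y2 - idx i) * (exp (- beta * - t) * exp (- beta * t))); [ring|rewrite H2; ring].
Qed.

Lemma Gamma_int_Phi alpha beta i t z : 0 < beta -> beta < alpha -> 0 <= t ->
  Gamma_int alpha beta z -> Gamma_int alpha beta (Phi alpha beta i t z).
Proof.
  intros Hb Hab Ht [eps [He Hball]].
  set (D := exp (- alpha * - t)). set (G := exp (- beta * - t)).
  assert (HD : 1 <= D) by (apply exp_ge1; nra).
  assert (HG : 0 < G <= D) by (split; [apply exp_pos| apply exp_le; nra]).
  exists (eps / D). split. { apply Rdiv_lt_0_compat; lra. }
  intros y Hy. rewrite <- (Phi_inv alpha beta i t y).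
  apply Gamma_Phi; auto. apply Hball.
  assert (H1 : exp (- alpha * - t) * exp (- alpha * t) = 1) by (rewrite <- exp_plus; replace (- alpha * - t + - alpha * t) with 0 by ring; apply exp_0).
  assert (H2 : exp (- beta * - t) * exp (- beta * t) = 1) by (rewrite <- exp_plus; replace (- beta * - t + - beta * t) with 0 by ring; apply exp_0).
  fold D in H1. fold G in H2.
  destruct y as [y1 y2]; destruct z as [z1 z2]. unfold Phi in *; simpl in *. fold D G.
  set (a := y1 - (idx i + (z1 - idx i) * exp (- alpha * t))) in *.
  set (b := y2 - (idx i + (z2 - idx i) * exp (- beta * t))) in *.
  assert (Ea : idx i + (y1 - idx i) * D - z1 = a * D).
  { unfold a. transitivity (idx i + (y1 - idx i) * D - (idx i + (z1 - idx i) * (D * exp (- alpha * t)))).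
    rewrite H1. ring. ring. }
  assert (Eb : idx i + (y2 - idx i) * G - z2 = b * G).
  { unfold b. transitivity (idx i + (y2 - idx i) * G - (idx i + (z2 - idx i) * (G * exp (- beta * t)))).
    rewrite H2. ring. ring. }
  rewrite Ea, Eb.
  apply sqrt_lt_sq in Hy; [|nra].
  apply sq_lt_sqrt; [nra|lra|].
  assert (Hs : (eps / D) ^ 2 * D ^ 2 = eps ^ 2) by (field; lra).
  assert ((a * D) ^ 2 + (b * G) ^ 2 <= D ^ 2 * (a ^ 2 + b ^ 2)).
  { assert (G^2 <= D^2) by nra. nra. }
  clearbody a b D G.
  assert (Hy' : a^2 + b^2 < (eps/D)^2) by lra.
  assert (D^2 * (a^2 + b^2) < D^2 * (eps/D)^2) by (apply Rmult_lt_compat_l; nra).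
  lra.
Qed.

Lemma exp_lt1 x : x < 0 -> exp x < 1.
Proof. intros. rewrite <- exp_0. apply exp_increasing; auto. Qed.
Lemma exp_gt1 x : 0 < x -> 1 < exp x.
Proof. intros. rewrite <- exp_0. apply exp_increasing; auto. Qed.
Lemma ln_pos x : 1 < x -> 0 < ln x.
Proof. intros. rewrite <- ln_1. apply ln_increasing; lra. Qed.
Lemma ln_neg x : 0 < x < 1 -> ln x < 0.
Proof. intros. rewrite <- ln_1. apply ln_increasing; lra. Qed.

Lemma sqball x y eps : 0 < eps -> (fst y - fst x)^2 + (snd y - snd x)^2 < eps^2 ->
  sqrt ((fst y - fst x)^2 + (snd y - snd x)^2) < eps.
Proof. intros. apply sq_lt_sqrt; [apply Rplus_le_le_0_compat; apply pow2_ge_0|lra|auto]. Qed.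

Lemma int_strict alpha beta z : Gamma_int alpha beta z ->
  0 < snd z < 1 /\ rpow (snd z) (alpha/beta) < fst z < 1 - rpow (1 - snd z) (alpha/beta).
Proof.
  destruct z as [z1 z2]; intros [eps [He Hb]]; simpl.
  assert (Hb' : forall y1 y2, (y1 - z1)^2 + (y2 - z2)^2 < eps^2 -> Gamma alpha beta (y1, y2)).
  { intros y1 y2 Hy. apply Hb. apply (sqball (z1,z2) (y1,y2)); auto. }
  pose proof (Hb' z1 (z2 - eps/2) ltac:(nra)) as G1.
  pose proof (Hb' z1 (z2 + eps/2) ltac:(nra)) as G2.
  pose proof (Hb' (z1 - eps/2) z2 ltac:(nra)) as G3.
  pose proof (Hb' (z1 + eps/2) z2 ltac:(nra)) as G4.
  unfold Gamma in *; simpl in *. lra.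
Qed.

Lemma sq_bound a b e : 0 < e -> a^2 + b^2 < e^2 -> -e < a < e.
Proof. intros. assert (a^2 < e^2) by (pose proof (pow2_ge_0 b); lra). split; nra. Qed.

Lemma rpow_small P y : 1 < P -> 0 < y <= 3/4 -> rpow y P <= y * exp ((P-1) * ln (3/4)).
Proof.
  intros HP Hy. rewrite rpow_pos by lra.
  replace (P * ln y) with (ln y + (P - 1) * ln y) by ring.
  rewrite exp_plus, exp_ln by lra. apply Rmult_le_compat_l; [lra|].
  apply exp_le. assert (ln y <= ln (3/4)) by (apply ln_le; lra). nra.
Qed.

Lemma int_nonempty alpha beta : 0 < beta -> beta < alpha -> Gamma_int alpha beta (1/2, 1/2).
Proof.
  intros Hb Hab. pose proof (Pge1 alpha beta Hb Hab) as HP. set (P := alpha/beta) in *.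
  set (c := exp ((P-1) * ln (3/4))).
  assert (Hc : 0 < c < 1).
  { split. apply exp_pos. apply exp_lt1. pose proof (ln_neg (3/4) ltac:(lra)). nra. }
  exists ((1 - c) / 8). split; [lra|].
  intros [y1 y2] Hy. cbn [fst snd] in Hy. apply sqrt_lt_sq in Hy; [|apply Rplus_le_le_0_compat; apply pow2_ge_0].
  assert (A1 : -((1-c)/8) < y1 - 1/2 < (1-c)/8) by (apply (sq_bound _ (y2 - 1/2)); lra).
  assert (A2 : -((1-c)/8) < y2 - 1/2 < (1-c)/8) by (apply (sq_bound _ (y1 - 1/2)); lra).
  pose proof (rpow_small P y2 HP ltac:(lra)) as R1.
  pose proof (rpow_small P (1 - y2) HP ltac:(lra)) as R2.
  fold c in R1, R2.
  unfold Gamma; simpl. fold P. split; [lra|]. split; nra.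
Qed.

Lemma rflow_inv alpha beta (S : pt -> Prop) :
  (forall i t y, 0 < t -> S y -> S (Phi alpha beta i t y)) ->
  forall ts i y, List.Forall (fun t => 0 < t) ts -> S y -> S (rflow alpha beta i ts y).
Proof.
  intros H ts. induction ts as [|t ts IH]; intros i y Hf Hy; simpl; auto.
  inversion Hf; subst. apply H; auto.
Qed.

Lemma pos_inv_of alpha beta (S : pt -> Prop) :
  (exists x, S x) -> (forall i t y, 0 < t -> S y -> S (Phi alpha beta i t y)) ->
  pos_invariant alpha beta S.
Proof.
  intros Hne H. split; auto. intros y Hy x [i [ts [_ [Hf Hx]]]]. subst.
  unfold multiflow. apply rflow_inv; auto. apply List.Forall_rev; auto.
Qed.

Lemma time_of alpha beta mu : 0 < beta -> 0 < mu ->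
  exp (- beta * (- ln mu / beta)) = mu /\ exp (- alpha * (- ln mu / beta)) = exp (alpha / beta * ln mu).
Proof.
  intros. split.
  - replace (- beta * (- ln mu / beta)) with (ln mu) by (field; lra). apply exp_ln; auto.
  - f_equal. field. lra.
Qed.

Lemma time_pos beta mu : 0 < beta -> 0 < mu < 1 -> 0 < - ln mu / beta.
Proof. intros. pose proof (ln_neg mu H0). apply Rdiv_lt_0_compat; lra. Qed.

Lemma stepB alpha beta w1 w2 z1 z2 : 0 < beta -> beta < alpha -> 0 < z2 < 1 ->
  exp (alpha/beta * ln z2) < z1 -> z1 < 1 - exp (alpha/beta * ln (1 - z2)) ->
  0 < w1 -> z2 < w2 -> w1 * exp (alpha/beta * ln z2) < z1 * exp (alpha/beta * ln w2) ->
  exists t s', 0 < t /\ 0 < s' /\ (z1, z2) = Phi alpha beta true s' (Phi alpha beta false t (w1, w2)).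
Proof.
  intros Hb Hab Hz Hz1 Hz2 Hw1 Hw2 Hw.
  pose proof (Pge1 alpha beta Hb Hab) as HP. set (P := alpha/beta) in *.
  set (ez := exp (P * ln z2)) in *. set (ew := exp (P * ln w2)) in *.
  set (e1 := exp (P * ln (1 - z2))) in *.
  assert (Hez : 0 < ez) by apply exp_pos. assert (Hew : 0 < ew) by apply exp_pos.
  assert (He1 : 0 < e1) by apply exp_pos.
  set (Kw := w1 / ew). assert (HKw : Kw * ew = w1) by (unfold Kw; field; lra).
  assert (HKw0 : 0 < Kw) by (unfold Kw; apply Rdiv_lt_0_compat; lra).
  set (C := (1 - z1) / e1). assert (HCe : C * e1 = 1 - z1) by (unfold C; field; lra).
  assert (HC : 1 < C) by nra.
  assert (HKz : Kw * ez < z1) by nra.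
  pose proof (ln_pos C HC) as HlnC.
  set (q := exp (- ln C / (2 * P))).
  assert (Hq : 0 < q < 1).
  { split. apply exp_pos. apply exp_lt1. apply Rdiv_neg_pos; lra. }
  set (u0 := (1 - q) * z2).
  assert (Hu0 : 0 < u0 < z2) by (unfold u0; nra).
  assert (Hu0q : q < 1 - u0) by (unfold u0; nra).
  set (h := fun u => 1 - C * exp (P * ln (1 - u)) - Kw * exp (P * ln u)).
  assert (Hh0 : h u0 < 0).
  { unfold h.
    assert (exp (P * ln q) < exp (P * ln (1 - u0))).
    { apply exp_increasing. apply Rmult_lt_compat_l; [lra|]. apply ln_increasing; lra. }
    assert (Eq : exp (P * ln q) = exp (- ln C / 2)).
    { unfold q. rewrite ln_exp. f_equal. field. lra. }
    assert (C * exp (- ln C / 2) = exp (ln C / 2)).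
    { rewrite <- (exp_ln C) at 1 by lra. rewrite <- exp_plus. f_equal. field. }
    assert (1 < exp (ln C / 2)) by (apply exp_gt1; lra).
    pose proof (exp_pos (P * ln u0)). nra. }
  assert (Hhz : 0 < h z2).
  { unfold h. fold e1 ez. nra. }
  assert (Hcont : forall a, u0 <= a <= z2 -> continuity_pt h a).
  { intros a Ha. unfold h. apply continuity_pt_filterlim.
    apply (ex_derive_continuous (fun u => 1 - C * exp (P * ln (1 - u)) - Kw * exp (P * ln u))).
    auto_derive. lra. }
  destruct (Ranalysis5.IVT_interv h u0 z2 Hcont ltac:(lra) Hh0 Hhz) as [u [Hu Hhu]].
  assert (Huz : u < z2).
  { destruct (Req_dec u z2) as [E|E]; [rewrite E in Hhu; lra|lra]. }
  assert (Hu1 : 0 < u < 1) by lra.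
  set (lam := u / w2).
  assert (Hlam : 0 < lam < 1).
  { unfold lam. split. apply Rdiv_lt_0_compat; lra. apply (Rmult_lt_reg_r w2); [lra|].
    unfold Rdiv. rewrite Rmult_assoc, Rinv_l; lra. }
  set (b := (1 - u) / (1 - z2)).
  assert (Hb1 : 1 < b).
  { unfold b. apply (Rmult_lt_reg_r (1 - z2)); [lra|].
    unfold Rdiv. rewrite Rmult_assoc, Rinv_l; lra. }
  destruct (time_of alpha beta lam Hb ltac:(lra)) as [T1 T2].
  exists (- ln lam / beta), (ln b / beta). split; [apply time_pos; lra|].
  split. { apply Rdiv_lt_0_compat; [apply ln_pos|]; lra. }
  assert (S1 : exp (- beta * (ln b / beta)) = / b).
  { replace (- beta * (ln b / beta)) with (- ln b) by (field; lra).
    rewrite exp_Ropp, exp_ln; lra. }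
  assert (S2 : exp (- alpha * (ln b / beta)) = exp (P * - ln b)).
  { f_equal. unfold P. field. lra. }
  unfold Phi, idx; simpl. rewrite T1, T2, S1, S2. fold P.
  assert (V1 : w1 * exp (P * ln lam) = Kw * exp (P * ln u)).
  { rewrite <- HKw. unfold ew. rewrite Rmult_assoc, <- exp_plus.
    assert (Hl : ln u = ln w2 + ln lam) by (rewrite <- ln_mult by lra; f_equal; unfold lam; field; lra).
    rewrite Hl. f_equal. f_equal. ring. }
  assert (V2 : exp (P * ln (1 - u)) * exp (P * - ln b) = e1).
  { rewrite <- exp_plus. unfold e1. f_equal. unfold b, Rdiv.
    rewrite ln_mult, ln_Rinv; try ring; try lra; apply Rinv_0_lt_compat; lra. }
  assert (Hh : Kw * exp (P * ln u) - 1 = - C * exp (P * ln (1 - u))).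
  { unfold h in Hhu. lra. }
  f_equal.
  - rewrite Rplus_0_l, Rminus_0_r, V1, Hh.
    transitivity (1 - C * (exp (P * ln (1 - u)) * exp (P * - ln b))); [|ring].
    rewrite V2. lra.
  - rewrite Rplus_0_l, Rminus_0_r. unfold lam, b. field. lra.
Qed.

Lemma reach alpha beta x z1 z2 : 0 < beta -> beta < alpha -> 0 < z2 < 1 ->
  exp (alpha/beta * ln z2) < z1 -> z1 < 1 - exp (alpha/beta * ln (1 - z2)) ->
  exists s t s', 0 < s /\ 0 < t /\ 0 < s' /\
    (z1, z2) = Phi alpha beta true s' (Phi alpha beta false t (Phi alpha beta true s x)).
Proof.
  intros Hb Hab Hz Hz1 Hz2.
  pose proof (Pge1 alpha beta Hb Hab) as HP. set (P := alpha/beta) in *.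
  set (ez := exp (P * ln z2)) in *. assert (Hez : 0 < ez) by apply exp_pos.
  set (Kz := z1 / ez). assert (HKz : Kz * ez = z1) by (unfold Kz; field; lra).
  assert (HK1 : 1 < Kz) by nra.
  pose proof (ln_pos Kz HK1) as HlnK.
  set (r := exp (- ln Kz / (2 * P))).
  assert (Hr : 0 < r < 1).
  { split. apply exp_pos. apply exp_lt1. apply Rdiv_neg_pos; lra. }
  assert (Er : exp (P * ln r) = exp (- ln Kz / 2)).
  { unfold r. rewrite ln_exp. f_equal. field. lra. }
  set (m := Kz * exp (- ln Kz / 2)).
  assert (Hm : 1 < m).
  { unfold m. rewrite <- (exp_ln Kz) at 1 by lra. rewrite <- exp_plus. apply exp_gt1. lra. }
  destruct x as [x1 x2].
  set (A := (x1 - 1)^2 + (x2 - 1)^2 + 1).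
  pose proof (pow2_ge_0 (x1 - 1)). pose proof (pow2_ge_0 (x2 - 1)).
  pose proof (pow2_ge_0 (x1 - 1 - 1/2)). pose proof (pow2_ge_0 (x2 - 1 - 1/2)).
  pose proof (pow2_ge_0 (x1 - 1 + 1/2)). pose proof (pow2_ge_0 (x2 - 1 + 1/2)).
  assert (HA : 1 <= A) by (unfold A; lra).
  assert (Hx1 : - A <= x1 - 1 <= A) by (unfold A; split; nra).
  assert (Hx2 : - A <= x2 - 1 <= A) by (unfold A; split; nra).
  clearbody A.
  set (mu := Rmin (1/2) (Rmin ((1 - r) / (2 * A)) (Rmin ((1 - z2) / (2 * A)) ((m - 1) / (2 * A))))).
  assert (Hmu0 : 0 < mu).
  { unfold mu. repeat apply Rmin_glb_lt; try lra; apply Rdiv_lt_0_compat; lra. }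
  assert (Hmu1 : mu <= 1/2) by apply Rmin_l.
  assert (Hm1 : mu <= (1 - r) / (2 * A)) by (eapply Rle_trans; [apply Rmin_r|apply Rmin_l]).
  assert (Hm2 : mu <= (1 - z2) / (2 * A)) by (eapply Rle_trans; [apply Rmin_r|]; eapply Rle_trans; [apply Rmin_r|apply Rmin_l]).
  assert (Hm3 : mu <= (m - 1) / (2 * A)) by (eapply Rle_trans; [apply Rmin_r|]; eapply Rle_trans; [apply Rmin_r|apply Rmin_r]).
  assert (HAm1 : A * mu <= (1 - r) / 2).
  { replace ((1 - r)/2) with (A * ((1 - r) / (2 * A))) by (field; lra). apply Rmult_le_compat_l; lra. }
  assert (HAm2 : A * mu <= (1 - z2) / 2).
  { replace ((1 - z2)/2) with (A * ((1 - z2) / (2 * A))) by (field; lra). apply Rmult_le_compat_l; lra. }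
  assert (HAm3 : A * mu <= (m - 1) / 2).
  { replace ((m - 1)/2) with (A * ((m - 1) / (2 * A))) by (field; lra). apply Rmult_le_compat_l; lra. }
  destruct (time_of alpha beta mu Hb Hmu0) as [T1 T2]. fold P in T2.
  set (e2 := exp (P * ln mu)) in *.
  assert (He2 : 0 < e2 <= mu).
  { split. apply exp_pos. unfold e2. rewrite <- (exp_ln mu) at 2 by lra. apply exp_le.
    pose proof (ln_neg mu ltac:(lra)). nra. }
  set (w1 := 1 + (x1 - 1) * e2). set (w2 := 1 + (x2 - 1) * mu).
  assert (Hw1a : 1 - A * mu <= w1) by (unfold w1; nra).
  assert (Hw1b : w1 <= 1 + A * mu) by (unfold w1; nra).
  assert (Hw2a : 1 - A * mu <= w2) by (unfold w2; nra).
  assert (Hw2r : r <= w2) by lra.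
  assert (Hew : exp (P * ln r) <= exp (P * ln w2)).
  { apply exp_le. apply Rmult_le_compat_l; [lra|]. apply ln_le; lra. }
  rewrite Er in Hew. fold m in Hew.
  assert (Hmm : m <= Kz * exp (P * ln w2)).
  { unfold m. apply Rmult_le_compat_l; lra. }
  destruct (stepB alpha beta w1 w2 z1 z2 Hb Hab Hz Hz1 Hz2) as [t [s' [Ht [Hs' Heq]]]].
  - lra.
  - lra.
  - fold P ez. pose proof (exp_pos (P * ln w2)). nra.
  - exists (- ln mu / beta), t, s'. split; [apply time_pos; lra|]. split; [auto|]. split; [auto|].
    rewrite Heq. f_equal. f_equal.
    unfold Phi, idx; simpl. rewrite T1, T2. reflexivity.
Qed.

Theorem lemma4p1 (alpha beta : R) (Hbeta : 0 < beta) (Hab : beta < alpha) :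
  (pos_invariant alpha beta (Gamma alpha beta) /\
   pos_invariant alpha beta (Gamma_int alpha beta)) /\
  (forall x : pt, forall z : pt, Gamma_int alpha beta z -> L alpha beta x z).
Proof.
  pose proof (int_nonempty alpha beta Hbeta Hab) as Hne.
  split; [split|].
  - apply pos_inv_of.
    + exists (1/2, 1/2). destruct Hne as [eps [He Hb]]. apply Hb.
      simpl. replace ((1/2 - 1/2) * ((1/2 - 1/2) * 1) + (1/2 - 1/2) * ((1/2 - 1/2) * 1)) with 0 by ring.
      rewrite sqrt_0. auto.
    + intros. apply Gamma_Phi; auto; lra.
  - apply pos_inv_of.
    + exists (1/2, 1/2). auto.
    + intros. apply Gamma_int_Phi; auto; lra.
  - intros x [z1 z2] Hz. apply int_strict in Hz. simpl in Hz.
    destruct Hz as [Hz [Hz1 Hz2]].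
    rewrite rpow_pos in Hz1 by lra. rewrite rpow_pos in Hz2 by lra.
    destruct (reach alpha beta x z1 z2 Hbeta Hab Hz Hz1 Hz2) as [s [t [s' [Hs [Ht [Hs' Heq]]]]]].
    exists true, (s :: t :: s' :: nil). split; [discriminate|]. split.
    + repeat constructor; auto.
    + rewrite Heq. reflexivity.
Qed.
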